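(* With the conventions $A_0=1$, $B_0=0$, the tiling numbers satisfy, for all $n\ge2$, $$A_{2n}=6A_{2n-2}-A_{2n-4}-2,\qquad A_{2n+1}=6A_{2n-1}-A_{2n-3}+2\ (n\ge2),$$ $$B_{2n}=6B_{2n-2}-B_{2n-4}+2,\qquad B_{2n+1}=6B_{2n-1}-B_{2n-3}-2\ (n\ge2).$$
   Context: Let $s=\sqrt3/2$. Consider the standard triangular lattice in the plane whose vertices are the points $(a+b/2,\,bs)$ with $a,b\in\mathbb Z$ and whose edges are the unit segments joining lattice points in the directions $0^\circ,60^\circ,120^\circ$; it divides the plane into unit equilateral triangles called cells. A small tile is a single cell; a large tile is an equilateral triangle of side $2$ whose vertices are lattice points (so it is a union of $4$ cells; it may point up or down). For a region $R$ that is a finite union of cells, a tiling of $R$ is a finite set of small and large tiles, each contained in $R$, with pairwise disjoint interiors and union equal to $R$. For $n\ge1$, $A_n$ is the parallelogram with vertices $(0,0),(n,0),(n+1,2s),(1,2s)$ and $B_n$ is the trapezoid with vertices $(0,0),(n+1,0),(n,2s),(1,2s)$ (for $n=1$ it is a triangle of side $2$); each consists of $4n$ cells. By abuse of notation, $A_n$ and $B_n$ also denote the number of tilings of these regions. *)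

(* Defs.v *)
From HB Require Import structures.
From mathcomp Require Import all_boot all_order all_algebra.
From mathcomp Require Import finmap.
From mathcomp Require Import boolp classical_sets cardinality.
Set Implicit Arguments. Unset Strict Implicit. Unset Printing Implicit Defensive.
Import Order.TTheory GRing.Theory Num.Theory.

(* Lattice coordinates: the lattice point (a,b) in Z^2 is the plane point
   (a + b/2, b*sqrt3/2).
   A cell is encoded as (a, b, up):
   - up = true  : the up-triangle with vertices (a,b), (a+1,b), (a,b+1);
   - up = false : the down-triangle with vertices (a+1,b), (a,b+1), (a+1,b+1).
   Every unit cell of the triangular lattice has exactly one such code. *)
Definition cell : Type := (int * int * bool)%type.

(* A tile is either a small tile (inl c : a single cell c), or a large tile
   inr (a, b, up):
   - up = true  : the side-2 up-triangle with vertices (a,b),(a+2,b),(a,b+2);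
   - up = false : the side-2 down-triangle with vertices (a+2,b),(a,b+2),(a+2,b+2).
   Every side-2 lattice triangle has exactly one such code. *)
Definition tile : Type := (cell + (int * int * bool))%type.

Definition tile_cells (t : tile) : seq cell :=
  match t with
  | inl c => [:: c]
  | inr (a, b, true) =>
      [:: (a, b, true); (a + 1, b, true); (a, b + 1, true); (a, b, false)]
  | inr (a, b, false) =>
      [:: (a + 1, b, false); (a, b + 1, false); (a + 1, b + 1, false);
          (a + 1, b + 1, true)]
  end%R.

(* A region is a (finite) union of cells, given by its set of cells.
   Since tiles are unions of cells, two tiles have disjoint interiors iff they
   share no cell, and a set of tiles has union R iff its cells are exactly
   those of R. *)
Definition is_tiling (R : cell -> bool) (T : {fset tile}) : Prop :=
  [/\ (forall t, t \in T -> forall c, c \in tile_cells t -> R c),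
      (forall t1 t2, t1 \in T -> t2 \in T -> t1 <> t2 ->
         forall c, c \in tile_cells t1 -> c \notin tile_cells t2)
    & (forall c, R c -> exists2 t, t \in T & c \in tile_cells t)].

Definition num_tilings (R : cell -> bool) : nat :=
  #|` fset_set [set T : {fset tile} | is_tiling R T] |%fset.

(* A_n: parallelogram (0,0),(n,0),(n+1,2s),(1,2s); in lattice coordinates
   the parallelogram 0 <= a <= n, 0 <= b <= 2; its cells are the cells
   (a,b,_) with 0 <= a <= n-1, 0 <= b <= 1. *)
Definition regionA (n : nat) (c : cell) : bool :=
  let: (a, b, _) := c in
  [&& (0 <= a)%R, (a < n%:Z)%R, (0 <= b)%R & (b <= 1)%R].

(* B_n: trapezoid (0,0),(n+1,0),(n,2s),(1,2s); in lattice coordinates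
   { a >= 0, 0 <= b <= 2, a + b <= n+1 }.  A cell lies in it iff its three
   vertices do:
   up (a,b):   a >= 0, 0 <= b <= 1, a + b + 1 <= n + 1;
   down (a,b): a >= 0, 0 <= b <= 1, a + b + 2 <= n + 1. *)
Definition regionB (n : nat) (c : cell) : bool :=
  let: (a, b, up) := c in
  [&& (0 <= a)%R, (0 <= b)%R, (b <= 1)%R &
      (a + b + (if up then 1 else 2) <= n%:Z + 1)%R].

Definition A (n : nat) : nat := if n is 0 then 1 else num_tilings (regionA n).
Definition B (n : nat) : nat := if n is 0 then 0 else num_tilings (regionB n).

(* Main.v *)
Require Import Defs.
From HB Require Import structures.
From mathcomp Require Import all_boot all_order all_algebra.
From mathcomp Require Import finmap.
From mathcomp Require Import boolp classical_sets cardinality.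
From mathcomp Require Import zify.
Import GRing.Theory Num.Theory.

Module TilingLib.
Set Implicit Arguments. Unset Strict Implicit. Unset Printing Implicit Defensive.
Local Open Scope fset_scope.
Definition counts (R : cell -> bool) (k : nat) :=
  exists S : {fset {fset tile}}, (forall T, is_tiling R T <-> T \in S) /\ #|` S| = k.

Lemma counts_num R k : counts R k -> num_tilings R = k.
Proof.
move=> [S [HS <-]]; rewrite /num_tilings.
have -> : ([set T : {fset tile} | is_tiling R T] = [set` S])%classic.
  by apply/seteqP; split => T /=; rewrite /= HS.
by rewrite set_fsetK.
Qed.

Lemma counts_ext R R' k : R =1 R' -> counts R k -> counts R' k.
Proof.
move=> e [S [HS HC]]; exists S; split=> // T; rewrite -HS.
rewrite /is_tiling; split; case=> h1 h2 h3; split=> //.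
- by move=> t tT c ct; rewrite e; apply: h1 ct.
- by move=> c; rewrite e; apply: h3.
- by move=> t tT c ct; rewrite -e; apply: h1 ct.
- by move=> c; rewrite -e; apply: h3.
Qed.

Lemma tile_ne (t : tile) : exists c, c \in tile_cells t.
Proof.
case: t => [c|[[a b] [|]]] /=; first by exists c; rewrite inE.
- by exists (a, b, true); rewrite inE eqxx.
- by exists ((a+1)%R, b, false); rewrite inE eqxx.
Qed.

Lemma counts_empty R : (forall c, R c = false) -> counts R 1.
Proof.
move=> R0; exists [fset fset0]; split; last by rewrite cardfs1.
move=> T; rewrite inE; split.
- case=> h1 _ _; apply/eqP/fsetP => t; rewrite inE; apply/negP => tT.
  by have [c ct] := tile_ne t; have := h1 t tT c ct; rewrite R0.
- move/eqP=> ->; split=> //; by move=> c; rewrite R0.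
Qed.

Definition remt (R : cell -> bool) (t : tile) := fun c => R c && (c \notin tile_cells t).

Lemma F2 R T t : is_tiling R T -> t \in T -> is_tiling (remt R t) (T `\ t).
Proof.
case=> h1 h2 h3 tT; split.
- move=> t' /fsetD1P [nt t'T] c ct; rewrite /remt (h1 t' t'T c ct) /=.
  exact: (h2 t' t t'T tT (elimN eqP nt)).
- by move=> t1 t2 /fsetD1P [_ ?] /fsetD1P [_ ?]; apply: h2.
- move=> c /andP [Rc nc]; have [t' t'T ct'] := h3 c Rc; exists t' => //.
  apply/fsetD1P; split=> //; apply/eqP => e; by rewrite -e ct' in nc.
Qed.

Lemma F3 R T0 t : is_tiling (remt R t) T0 -> all R (tile_cells t) ->
  is_tiling R (t |` T0) /\ (forall c, c \in tile_cells t -> t \notin T0).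
Proof.
case=> h1 h2 h3 aR; split; last first.
  move=> c ct; apply/negP => tT; have := h1 t tT c ct.
  by rewrite /remt ct andbF.
split.
- move=> t' /fset1UP [->|t'T] c ct; first exact: (allP aR).
  by have /andP[] := h1 t' t'T c ct.
- move=> t1 t2 /fset1UP [->|t1T] /fset1UP [->|t2T] ne c //.
  + move=> ct; apply/negP => ct2; have := h1 t2 t2T c ct2.
    by rewrite /remt ct andbF.
  + move=> ct1; have := h1 t1 t1T c ct1; by case/andP.
  + exact: h2.
- move=> c Rc; case ct: (c \in tile_cells t).
    by exists t => //; rewrite fset1U1.
  have [t' t'T ct'] := h3 c (introT andP (conj Rc (negbT ct))).
  by exists t' => //; rewrite fset1Ur.
Qed.
Definition cont (c : cell) : seq tile :=
 let: (a,b,u) := c in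
 if u then [:: inl c; inr (a,b,true); inr (a-1,b,true); inr (a,b-1,true); inr (a-1,b-1,false)]%R
 else [:: inl c; inr (a,b,true); inr (a-1,b,false); inr (a,b-1,false); inr (a-1,b-1,false)]%R.

Lemma cont_spec c t : c \in tile_cells t -> t \in cont c.
Proof.
case: t => [c'|[[x y] [|]]] /=.
- by rewrite inE => /eqP ->; case: c' => [[a b] [|]]; rewrite /= inE eqxx.
- by rewrite !inE => /or4P [] /eqP ->;
   rewrite /= !inE ?GRing.addrK ?eqxx ?orbT.
- by rewrite !inE => /or4P [] /eqP ->;
   rewrite /= !inE ?GRing.addrK ?eqxx ?orbT.
Qed.

Lemma peel (R : cell -> bool) c (Rc : R c) (L : seq tile) (k : tile -> nat) :
  uniq L -> (forall t, t \in L -> (c \in tile_cells t) && all R (tile_cells t)) ->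
  (forall t, t \in cont c -> all R (tile_cells t) -> t \in L) ->
  (forall t, t \in L -> counts (remt R t) (k t)) -> counts R (\sum_(t <- L) k t).
Proof.
move=> uL HL Hc Hk.
have gen : forall L', uniq L' -> {subset L' <= L} -> exists S : {fset {fset tile}},
   (forall T, T \in S <-> is_tiling R T /\ exists2 t, t \in L' & t \in T) /\
   #|` S| = \sum_(t <- L') k t.
  elim=> [|t L' IH] /=.
    move=> _ _; exists fset0; split; last by rewrite big_nil cardfs0.
    by move=> T; rewrite inE; split=> // [[_ [t]]]; rewrite in_nil.
  move=> /andP [tL' u] sub.
  have tL : t \in L by apply: sub; rewrite mem_head.
  have [S' [HS' HC']] := IH u (fun x xL => sub x (@mem_behead _ (t :: L') x xL)).
  have /andP [ct aR] := HL t tL.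
  have [St [HSt HCt]] := Hk t tL.
  have ntT0 : forall T0, T0 \in St -> t \notin T0.
    by move=> T0 /HSt til; exact: ((F3 til aR).2 c ct).
  exists ((fun T => t |` T) @` St `|` S'); split.
  - move=> T; rewrite in_fsetU; split.
    + case/orP => [/imfsetP [T0 T0in ->]|/HS' [tT [t' t'L t'T]]].
        have [til _] := F3 ((HSt T0).2 T0in) aR.
        by split=> //; exists t; rewrite ?mem_head ?fset1U1.
      by split=> //; exists t'; rewrite // inE t'L orbT.
    + case=> tilT [t' t'in t'T]; case tT: (t \in T).
        apply/orP; left; apply/imfsetP; exists (T `\ t); last by rewrite fsetD1K.
        by apply/HSt; apply: F2.
      apply/orP; right; apply/HS'; split=> //; exists t' => //.
      move: t'in; rewrite inE => /orP [/eqP e|//]; by rewrite -e t'T in tT.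
  - rewrite big_cons cardfsU.
    have -> : (fun T => t |` T) @` St `&` S' = fset0.
      apply/fsetP => T; rewrite in_fset0 in_fsetI; apply/negP.
      case/andP => /imfsetP [T0 T0in ->] /HS' [til [t' t'L t'T]].
      have ne : t <> t' by move=> e; rewrite e t'L in tL'.
      have /andP [ct' _] := HL t' (sub t' (@mem_behead _ (t :: L') t' t'L)).
      case: til => _ h2 _.
      have := h2 t t' (fset1U1 _ _) t'T ne c ct; by rewrite ct'.
    rewrite cardfs0 subn0 card_in_imfset ?HCt ?HC' //.
    move=> T1 T2 T1in T2in /= e.
    by rewrite -(fsetU1K (ntT0 _ T1in)) e fsetU1K // ntT0.
have [S [HS HC]] := gen L uL (fun x h => h).
exists S; split=> // T; rewrite HS; split; last by case.
move=> til; split=> //; case: (til) => h1 _ h3.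
have [t tT ct] := h3 c Rc; exists t => //.
apply: Hc; first exact: cont_spec.
by apply/allP => x; apply: h1.
Qed.
End TilingLib.
Import TilingLib.
Module TilingLib2.
Local Open Scope ring_scope.
Set Implicit Arguments. Unset Strict Implicit.

Definition reg (r0 r1 : int) (c : cell) : bool :=
  let: (a, b, u) := c in
  let i := 2 * a + (if u then 0 else 1) in
  (0 <= i) && ((b == 0) && (i < r0) || (b == 1) && (i < r1)).

Ltac ptw := move=> [[? ?] []]; rewrite /remt /reg /= ?inE ?xpair_eqE /=; apply/idP/idP; lia.

Lemma counts_reg r0 r1 r0' r1' k : r0 = r0' -> r1 = r1' ->
  counts (reg r0 r1) k -> counts (reg r0' r1') k.
Proof. by move=> -> ->. Qed.

Lemma O0 (m : int) k : 0 <= m -> counts (reg (2 * m+1) (2 * m)) k ->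
  counts (reg (2 * m+1) (2 * m+1)) k.
Proof.
move=> m0 H.
have := @peel (reg (2 * m+1) (2 * m+1)) (m, 1, true) _ [:: inl (m,1,true)] (fun _ => k).
rewrite big_cons big_nil addn0; apply.
- rewrite /reg /=; lia.
- by [].
- move=> t; rewrite inE => /eqP -> /=; rewrite !inE ?xpair_eqE /=; lia.
- move=> t; rewrite /cont !inE => /orP [/eqP ->|/or4P [] /eqP ->] /=; rewrite ?inE ?xpair_eqE /= ?eqxx //; lia.
- move=> t; rewrite inE => /eqP ->; apply: counts_ext H; ptw.
Qed.

Ltac mem_tac := move=> t; rewrite ?inE => /orP [/eqP -> | /eqP ->] /=;
   rewrite ?inE ?xpair_eqE /=; lia.
Ltac mem1_tac := move=> t; rewrite inE => /eqP -> /=; rewrite ?inE ?xpair_eqE /=; lia.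
Ltac cont_tac := move=> t; rewrite /cont !inE => /orP [/eqP ->|/or4P [] /eqP ->] /=;
   rewrite ?inE ?xpair_eqE /= ?eqxx ?orbT //; lia.

Lemma E1odd (m : int) k : 0 <= m -> counts (reg (2 * m + 1) (2 * m + 1)) k ->
  counts (reg (2 * m + 2) (2 * m + 1)) k.
Proof.
move=> m0 H.
have := @peel (reg (2 * m + 2) (2 * m + 1)) (m, 0, false) _ [:: inl (m,0,false)] (fun _ => k).
rewrite big_cons big_nil addn0; apply.
- rewrite /reg /=; lia.
- by [].
- mem1_tac.
- cont_tac.
- move=> t; rewrite inE => /eqP ->; apply: counts_ext H; ptw.
Qed.

Lemma E1zero k : counts (reg 0 0) k -> counts (reg 1 0) k.
Proof.
move=> H.
have := @peel (reg 1 0) (0, 0, true) _ [:: inl (0,0,true)] (fun _ => k).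
rewrite big_cons big_nil addn0; apply.
- by [].
- by [].
- mem1_tac.
- cont_tac.
- move=> t; rewrite inE => /eqP ->; apply: counts_ext H; ptw.
Qed.

Lemma E0one k : counts (reg 2 1) k -> counts (reg 2 2) k.
Proof.
move=> H.
have := @peel (reg 2 2) (0, 1, false) _ [:: inl (0,1,false)] (fun _ => k).
rewrite big_cons big_nil addn0; apply.
- by [].
- by [].
- mem1_tac.
- cont_tac.
- move=> t; rewrite inE => /eqP ->; apply: counts_ext H; ptw.
Qed.

Lemma E2odd (m : int) k1 k2 : 0 <= m -> counts (reg (2 * m + 2) (2 * m + 1)) k1 ->
  counts (reg (2 * m) (2 * m)) k2 -> counts (reg (2 * m + 3) (2 * m + 1)) (k1 + k2).
Proof.
move=> m0 H1 H2.
have := @peel (reg (2 * m + 3) (2 * m + 1)) (m + 1, 0, true) _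
  [:: inl (m + 1,0,true); inr (m + 1 - 1, 0, true)]
  (fun t => if t is inl _ then k1 else k2).
rewrite big_cons big_cons big_nil addn0; apply.
- rewrite /reg /=; lia.
- by [].
- mem_tac.
- cont_tac.
- move=> t; rewrite ?inE => /orP [/eqP -> | /eqP ->]; [apply: counts_ext H1|apply: counts_ext H2]; ptw.
Qed.

Lemma E0 (m : int) k1 k2 : 2 <= m -> counts (reg (2 * m) (2 * m - 1)) k1 ->
  counts (reg (2 * m - 1) (2 * m - 3)) k2 -> counts (reg (2 * m) (2 * m)) (k1 + k2).
Proof.
move=> m0 H1 H2.
have := @peel (reg (2 * m) (2 * m)) (m - 1, 1, false) _
  [:: inl (m - 1,1,false); inr (m - 1 - 1, 1 - 1, false)]
  (fun t => if t is inl _ then k1 else k2).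
rewrite big_cons big_cons big_nil addn0; apply.
- rewrite /reg /=; lia.
- by [].
- mem_tac.
- cont_tac.
- move=> t; rewrite ?inE => /orP [/eqP -> | /eqP ->]; [apply: counts_ext H1|apply: counts_ext H2]; ptw.
Qed.

Lemma E1even (m : int) k1 k2 : 1 <= m -> counts (reg (2 * m) (2 * m)) k1 ->
  counts (reg (2 * m - 2) (2 * m - 2)) k2 -> counts (reg (2 * m + 1) (2 * m)) (k1 + k2).
Proof.
move=> m0 H1 H2.
have := @peel (reg (2 * m + 1) (2 * m)) (m, 0, true) _
  [:: inl (m,0,true); inr (m - 1, 0, true)]
  (fun t => if t is inl _ then k1 else k2).
rewrite big_cons big_cons big_nil addn0; apply.
- rewrite /reg /=; lia.
- by [].
- mem_tac.
- cont_tac.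
- move=> t; rewrite ?inE => /orP [/eqP -> | /eqP ->]; first by apply: counts_ext H1; ptw.
  set R := remt _ _.
  have := @peel R (m - 1, 1, false) _ [:: inl (m - 1,1,false)] (fun _ => k2).
  rewrite big_cons big_nil addn0; apply.
  + rewrite /R /remt /reg /= ?inE ?xpair_eqE /=; lia.
  + by [].
  + move=> t'; rewrite inE => /eqP -> /=; rewrite /R /remt /reg /= !inE ?xpair_eqE /=; lia.
  + move=> t'; rewrite /cont !inE => /orP [/eqP ->|/or4P [] /eqP ->] /=;
    rewrite /R /remt /reg /= ?inE ?xpair_eqE /= ?eqxx ?orbT //; lia.
  + move=> t'; rewrite inE => /eqP ->; apply: counts_ext H2; rewrite /R; ptw.
Qed.
End TilingLib2.
Import TilingLib2.
Module TilingLib3.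
Local Open Scope ring_scope.
Fixpoint E (n : nat) : nat :=
  match n with 0 => 1%N | p.+1 => match p with 0 => 1%N | q.+1 =>
    match q with 0 => 4%N | n'.+1 => (E p + 3 * E q + E n')%N end end end.

Definition bval (m : nat) : nat := (E m + (if m is m'.+1 then E m' else 0))%N.

Lemma Lb (m : nat) : (forall j, (j <= m)%N -> counts (reg (2 * j%:Z) (2 * j%:Z)) (E j)) ->
  counts (reg (2 * m%:Z + 2) (2 * m%:Z + 1)) (bval m).
Proof.
move=> IH; apply: E1odd; first lia.
apply: O0; first lia.
case: m IH => [|m] IH.
  have := E1zero (IH 0%N (leqnn _)); rewrite /bval addn0.
  by apply: counts_reg; lia.
rewrite /bval.
have H2 : counts (reg (2 * m.+1%:Z - 2) (2 * m.+1%:Z - 2)) (E m).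
  by apply: counts_reg (IH m (leqnSn _)); lia.
have hm : (1 <= m.+1%:Z) by lia.
have := E1even hm (IH m.+1 (leqnn _)) H2.
by apply: counts_reg; lia.
Qed.

Lemma Lc (m : nat) : (forall j, (j <= m)%N -> counts (reg (2 * j%:Z) (2 * j%:Z)) (E j)) ->
  counts (reg (2 * m%:Z + 3) (2 * m%:Z + 1)) (bval m + E m).
Proof.
move=> IH; apply: E2odd; first lia.
- exact: Lb.
- exact: IH.
Qed.

Lemma chain (m : nat) : counts (reg (2 * m%:Z) (2 * m%:Z)) (E m).
Proof.
elim/ltn_ind: m => m IH.
case: m IH => [|[|j]] IH.
- apply: counts_empty => -[[a b] u] /=; apply/negP; case: u; lia.
- apply: E0one.
  have := @Lb 0%N (fun j hj => IH j hj).
  rewrite /bval addn0 /=. by apply: counts_reg; lia.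
- have -> : E j.+2 = (bval j.+1 + (bval j + E j))%N.
    rewrite /bval; case: j IH => [|j] IH //=. lia.
  have hm : (2 <= j.+2%:Z) by lia.
  apply: (E0 hm).
  + have := @Lb j.+1 (fun i hi => IH i hi). by apply: counts_reg; lia.
  + have := @Lc j (fun i hi => IH i (leq_trans hi (leqnSn _))). by apply: counts_reg; lia.
Qed.
End TilingLib3.
Import TilingLib3.
Module TilingLib4.
Local Open Scope ring_scope.
Lemma A_E n : A n = E n.
Proof.
case: n => [//|p]; rewrite /A.
apply: counts_num; apply: counts_ext (chain p.+1).
move=> [[a b] []]; rewrite /regionA /reg /=; apply/idP/idP; lia.
Qed.

Lemma B_E p : B p.+1 = (bval p + E p)%N.
Proof.
rewrite /B; apply: counts_num; apply: counts_ext (@Lc p (fun j _ => chain j)).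
move=> [[a b] []]; rewrite /regionB /reg /=; apply/idP/idP; lia.
Qed.

Lemma Erec n : E n.+3 = (E n.+2 + 3 * E n.+1 + E n)%N.
Proof. by []. Qed.

Lemma recP j : (E (2*j).+2)%:Z = 2 * (E (2*j).+1)%:Z + (E (2*j))%:Z + 1 /\
  (E (2*j).+3)%:Z = 2 * (E (2*j).+2)%:Z + (E (2*j).+1)%:Z - 1.
Proof.
elim: j => [|j [IH1 IH2]]; first by [].
rewrite mulnS add2n.
have e1 := Erec (2*j).+1; have e2 := Erec (2*j).+2.
split; lia.
Qed.
End TilingLib4.
Import TilingLib4.
Local Open Scope ring_scope.

Theorem mainTheorem4 (n : nat) (hn : (2 <= n)%N) :
  [/\ (A (2 * n))%:Z = 6 * (A (2 * n - 2))%:Z - (A (2 * n - 4))%:Z - 2,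
      (A (2 * n + 1))%:Z = 6 * (A (2 * n - 1))%:Z - (A (2 * n - 3))%:Z + 2,
      (B (2 * n))%:Z = 6 * (B (2 * n - 2))%:Z - (B (2 * n - 4))%:Z + 2
    & (B (2 * n + 1))%:Z = 6 * (B (2 * n - 1))%:Z - (B (2 * n - 3))%:Z - 2].
Proof.
case: n hn => [|[|p]] // _.
case: p => [|q].
  rewrite !A_E (B_E 3) (B_E 1) (B_E 4) (B_E 2) (B_E 0).
  by have -> : B (2 * 2 - 4) = 0%N by [].
set k := (2 * q)%N.
have e1 : (2 * q.+3 = k.+4.+2)%N by rewrite /k; lia.
have e2 : (2 * q.+3 - 2 = k.+4)%N by rewrite /k; lia.
have e3 : (2 * q.+3 - 4 = k.+2)%N by rewrite /k; lia.
have e4 : (2 * q.+3 + 1 = k.+4.+3)%N by rewrite /k; lia.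
have e5 : (2 * q.+3 - 1 = k.+4.+1)%N by rewrite /k; lia.
have e6 : (2 * q.+3 - 3 = k.+3)%N by rewrite /k; lia.
rewrite e2 e3 e5 e6 e4 e1 !A_E !B_E /bval.
have [r1 r2] := recP q; rewrite -/k in r1 r2.
have [r3 r4] := recP q.+1; rewrite mulnS add2n -/k in r3 r4.
have [r5 r6] := recP q.+2; rewrite !mulnS !add2n -/k in r5 r6.
split.
all: lia.
Qed.
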